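(* Let $1\le r\le s\le t$ and let $u=ABCd$, $v=A'B'C'd'$ be vertices of $E3C(r,s,t)$ with $A\ne A'$, $B\ne B'$, $C=C'$ and $d=d'$. Then there exist $2r+2$ pairwise internally disjoint $u$–$v$ paths in $E3C(r,s,t)$, each of length at most $r+s+5$ if $d=0$, and each of length at most $r+s+7$ if $d\in\{1,2\}$.
   Context: The exchanged 3-ary $n$-cube $E3C(r,s,t)$ ($r,s,t\ge1$, $n=r+s+t+1$): vertices are strings written $x=ABCd$ with $A\in\{0,1,2\}^r$, $B\in\{0,1,2\}^s$, $C\in\{0,1,2\}^t$, $d\in\{0,1,2\}$. Two distinct vertices $x=ABCd$, $y=A'B'C'd'$ are adjacent iff one of: (E0) $A=A',B=B',C=C'$ and $d\ne d'$; (E1) $d=d'=0$, $A=A'$, $B=B'$ and $C,C'$ differ in exactly one position; (E2) $d=d'=1$, $A=A'$, $C=C'$ and $B,B'$ differ in exactly one position; (E3) $d=d'=2$, $B=B'$, $C=C'$ and $A,A'$ differ in exactly one position. Paths are internally disjoint if they share no vertices other than their endpoints; length = number of edges. *)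

(* Defs.v *)
From mathcomp Require Import all_boot.
Set Implicit Arguments. Unset Strict Implicit. Unset Printing Implicit Defensive.

Definition vert (r s t : nat) : finType :=
  (r.-tuple 'I_3 * s.-tuple 'I_3 * t.-tuple 'I_3 * 'I_3)%type.

Definition vA {r s t} (x : vert r s t) : r.-tuple 'I_3 := x.1.1.1.
Definition vB {r s t} (x : vert r s t) : s.-tuple 'I_3 := x.1.1.2.
Definition vC {r s t} (x : vert r s t) : t.-tuple 'I_3 := x.1.2.
Definition vd {r s t} (x : vert r s t) : 'I_3 := x.2.

Definition diff1 {n} (X Y : n.-tuple 'I_3) : bool :=
  #|[pred i : 'I_n | tnth X i != tnth Y i]| == 1.

Definition i0 : 'I_3 := @Ordinal 3 0 isT.
Definition i1 : 'I_3 := @Ordinal 3 1 isT.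
Definition i2 : 'I_3 := @Ordinal 3 2 isT.

Definition e3c_adj {r s t} (x y : vert r s t) : bool :=
  [|| (vA x == vA y) && (vB x == vB y) && (vC x == vC y) && (vd x != vd y),
      (vd x == i0) && (vd y == i0) && (vA x == vA y) && (vB x == vB y)
        && diff1 (vC x) (vC y),
      (vd x == i1) && (vd y == i1) && (vA x == vA y) && (vC x == vC y)
        && diff1 (vB x) (vB y)
    | (vd x == i2) && (vd y == i2) && (vB x == vB y) && (vC x == vC y)
        && diff1 (vA x) (vA y)].

(* A u-v path is represented by the list p of vertices after u: the
   walk is u :: p, it must follow edges, end at v, and be simple.
   Its length (number of edges) is size p. *)
Definition is_uv_path {r s t} (u v : vert r s t) (p : seq (vert r s t)) : bool :=
  [&& path e3c_adj u p, last u p == v & uniq (u :: p)].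

(* interior vertices of the path u :: p (excluding both endpoints u and
   the last vertex of p) *)
Definition interior {T : Type} (p : seq T) : seq T := take (size p).-1 p.

Definition int_disjoint {T : eqType} (ps : seq (seq T)) : Prop :=
  forall i j, i < size ps -> j < size ps -> i != j ->
    forall x, x \in interior (nth [::] ps i) -> x \notin interior (nth [::] ps j).

(* Main.v *)
Require Import Defs.
From mathcomp Require Import all_boot zify.
Set Implicit Arguments. Unset Strict Implicit. Unset Printing Implicit Defensive.

Definition upd {n} (X : n.-tuple 'I_3) (S : seq 'I_n) (Y : n.-tuple 'I_3) : n.-tuple 'I_3 :=
  [tuple (if i \in S then tnth Y i else tnth X i) | i < n].

Lemma tnth_upd n (X Y : n.-tuple 'I_3) S i :
  tnth (upd X S Y) i = if i \in S then tnth Y i else tnth X i.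
Proof. by rewrite /upd tnth_mktuple. Qed.

Lemma upd_nil n (X Y : n.-tuple 'I_3) : upd X [::] Y = X.
Proof. by apply: eq_from_tnth => i; rewrite tnth_upd. Qed.

Definition dl {n} (X Y : n.-tuple 'I_3) : seq 'I_n :=
  [seq i <- enum 'I_n | tnth X i != tnth Y i].

Lemma mem_dl n (X Y : n.-tuple 'I_3) i : (i \in dl X Y) = (tnth X i != tnth Y i).
Proof. by rewrite mem_filter mem_enum andbT. Qed.

Lemma uniq_dl n (X Y : n.-tuple 'I_3) : uniq (dl X Y).
Proof. by rewrite filter_uniq // enum_uniq. Qed.

Lemma size_dl n (X Y : n.-tuple 'I_3) : size (dl X Y) <= n.
Proof. by rewrite -[n in _ <= n]size_enum_ord size_filter count_size. Qed.

Lemma upd_cover n (X Y : n.-tuple 'I_3) S : {subset dl X Y <= S} -> upd X S Y = Y.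
Proof.
move=> H; apply: eq_from_tnth => i; rewrite tnth_upd.
case: ifP => // hi; apply/eqP; apply/negPn/negP => hd.
by move: hi; rewrite H // mem_dl.
Qed.

Lemma dl_nil n (X Y : n.-tuple 'I_3) : X != Y -> dl X Y != [::].
Proof.
move=> h; apply/negP => /eqP e; move/negP: h; apply; apply/eqP.
by rewrite -(upd_cover (X:=X) (Y:=Y) (S:=[::])) ?upd_nil // e.
Qed.

Lemma diff1_one n (X Y : n.-tuple 'I_3) k :
  (forall i, (tnth X i != tnth Y i) = (i == k)) -> diff1 X Y.
Proof.
move=> H; have E : [pred i | tnth X i != tnth Y i] =i pred1 k by move=> i; rewrite !inE /= H.
by rewrite /diff1 (eq_card E) card1.
Qed.

Lemma diff1_sym n (X Y : n.-tuple 'I_3) : diff1 X Y = diff1 Y X.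
Proof.
rewrite /diff1; congr (_ == _); apply: eq_card => i; by rewrite !inE eq_sym.
Qed.

Lemma diff1_upd n (X Y : n.-tuple 'I_3) T x :
  x \notin T -> tnth X x != tnth Y x -> diff1 (upd X T Y) (upd X (rcons T x) Y).
Proof.
move=> hx hd; apply: (diff1_one (k:=x)) => i; rewrite !tnth_upd mem_rcons inE.
case: (eqVneq i x) => [->|_] /=; first by rewrite (negbTE hx).
by case: (i \in T); rewrite eqxx.
Qed.

Lemma diff1_upd1 n (X Y : n.-tuple 'I_3) x :
  tnth X x != tnth Y x -> diff1 X (upd X [:: x] Y).
Proof. by move=> h; have := diff1_upd (T:=[::]) (Y:=Y) (X:=X) (x:=x) isT h; rewrite upd_nil. Qed.

Lemma upd_take_inj n (X0 T : n.-tuple 'I_3) L l l' : uniq L ->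
  {in L, forall i, tnth X0 i != tnth T i} ->
  l <= size L -> l' <= size L -> upd X0 (take l L) T = upd X0 (take l' L) T -> l = l'.
Proof.
move=> hu hd.
suff H : forall k k', k < k' -> k' <= size L ->
    upd X0 (take k L) T = upd X0 (take k' L) T -> False.
  move=> h1 h2 e; case: (ltngtP l l') => // hll.
    by case: (H l l').
  by case: (H l' l).
move=> k k' hk hk' e. have hks : k < size L by apply: leq_trans hk hk'.
have [x0 _] : exists x0 : 'I_n, True by case: L hu hd hk' hks {e} => // x ?; exists x.
have hx := mem_nth x0 hks.
have := congr1 (fun X => tnth X (nth x0 L k)) e => /=.
rewrite !tnth_upd !(in_take _ hx) !index_uniq // ltnn hk.
by move/eqP; rewrite (negbTE (hd _ hx)).
Qed.

Lemma path_iota (T : Type) (e : rel T) (f : nat -> T) m n :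
  (forall l, m <= l -> l < m + n -> e (f l) (f l.+1)) ->
  path e (f m) [seq f l | l <- iota m.+1 n].
Proof.
elim: n m => [|n IH] m H //=; apply/andP; split; first by apply: H; lia.
by apply: IH => l h1 h2; apply: H; lia.
Qed.

Lemma last_iota_map (T : Type) (f : nat -> T) m n :
  last (f m) [seq f l | l <- iota m.+1 n] = f (m + n).
Proof. by elim: n m => [|n IH] m /=; [rewrite addn0 | rewrite IH addnS]. Qed.

Lemma uniq_iota_map (T : eqType) (f : nat -> T) m n :
  (forall l l', m <= l <= m + n -> m <= l' <= m + n -> f l = f l' -> l = l') ->
  uniq (f m :: [seq f l | l <- iota m.+1 n]).
Proof.
move=> H; rewrite -[f m :: _]/(map f (iota m n.+1)).
rewrite map_inj_in_uniq ?iota_uniq // => l l'; rewrite !mem_iota => h1 h2.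
apply: H; lia.
Qed.

Definition disj (T : eqType) (p q : seq T) := all (fun x => x \notin interior q) (interior p).

Lemma int_disjoint_pairwise (T : eqType) (ps : seq (seq T)) :
  pairwise (@disj T) ps -> int_disjoint ps.
Proof.
move=> /(pairwiseP [::]) H i j hi hj hij x hxi.
case: (ltngtP i j) hij => // hlt _.
  by have /allP := H i j hi hj hlt; apply.
have /allP h := H j i hj hi hlt; apply/negP => hxj.
by move: (h x hxj); rewrite hxi.
Qed.

Lemma pairwise_lab (L T : eqType) (f : L -> T) (R : rel T) (xs : seq L) :
  uniq xs -> {in xs &, forall x y, x != y -> R (f x) (f y)} -> pairwise R (map f xs).
Proof.
rewrite pairwise_map; elim: xs => //= x xs IH /andP[hx hu] H.
apply/andP; split.
  apply/allP => y hy; apply: H; rewrite ?inE ?eqxx ?hy ?orbT //.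
  by apply: contraNneq hx => ->.
by apply: IH => // a b ha hb; apply: H; rewrite inE ?ha ?hb orbT.
Qed.

Lemma interior_mem (T : eqType) (u v x : T) p :
  uniq (u :: p) -> last u p = v -> x \in interior p -> (x \in p) && (x != v).
Proof.
case/lastP: p => [|q y] //.
rewrite /interior size_rcons /= -cats1 take_size_cat // cats1 last_rcons.
move=> /andP[_]; rewrite rcons_uniq => /andP[hy _] <- hx.
rewrite mem_rcons inE hx orbT /=; by apply: contraNneq hy => <-.
Qed.

Lemma uniq_pairs (I J : eqType) (s : seq I) (f : I -> seq J) :
  uniq s -> (forall x, uniq (f x)) -> uniq [seq (x, y) | x <- s, y <- f x].
Proof.
elim: s => //= x s IH /andP[hx hs] hf; rewrite cat_uniq IH // andbT.
rewrite map_inj_uniq ?hf //; last by move=> a b [].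
apply/hasPn => z /allpairsPdep [x' [y' [hx' _ ->]]].
apply/mapP => -[y _ [ex _]]; by move: hx; rewrite -ex hx'.
Qed.

Lemma sum_count (I : Type) (P : pred I) (s : seq I) :
  sumn [seq (if P x then 1 else 2) | x <- s] + count P s = 2 * size s.
Proof. elim: s => //= x s IH; case: (P x); lia. Qed.

Lemma nxt_neq (k : 'I_3) : (if k == i0 then i1 else i0) != k.
Proof. by case: k => [[|[|[|k]]] hk]. Qed.

Lemma cnt3 (x y : 'I_3) :
  size [seq c <- [:: i0; i1; i2] | (c != x) && (c != y)] = if x != y then 1 else 2.
Proof. by case: x => [[|[|[|x]]] hx]; case: y => [[|[|[|y]]] hy]. Qed.

Lemma uniq3 (P : pred 'I_3) : uniq [seq c <- [:: i0; i1; i2] | P c].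
Proof. by rewrite filter_uniq. Qed.

Lemma disjI (T : eqType) (u v : T) (p q : seq T) :
  uniq (u :: p) -> last u p = v -> uniq (u :: q) -> last u q = v ->
  (forall x, x \in p -> x != v -> x \in q -> x != v -> False) -> disj p q.
Proof.
move=> u1 l1 u2 l2 H; apply/allP => x hx.
have /andP[h1 h2] := interior_mem u1 l1 hx.
apply/negP => hy; have /andP[h3 h4] := interior_mem u2 l2 hy.
exact: (H x h1 h2 h3 h4).
Qed.

Section Graph.
Variables r s t : nat.
Local Notation V := (vert r s t).
Implicit Types (X : r.-tuple 'I_3) (Y : s.-tuple 'I_3) (Z : t.-tuple 'I_3).

Lemma adjE0 X Y Z (e e' : 'I_3) : e != e' -> e3c_adj ((X,Y,Z,e) : V) (X,Y,Z,e').
Proof. by move=> h; rewrite /e3c_adj /vA /vB /vC /vd /= !eqxx h. Qed.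

Lemma adjA X X' Y Z : diff1 X X' -> e3c_adj ((X,Y,Z,i2) : V) (X',Y,Z,i2).
Proof. by move=> h; rewrite /e3c_adj /vA /vB /vC /vd /= !eqxx h !orbT. Qed.

Lemma adjB X Y Y' Z : diff1 Y Y' -> e3c_adj ((X,Y,Z,i1) : V) (X,Y',Z,i1).
Proof. by move=> h; rewrite /e3c_adj /vA /vB /vC /vd /= !eqxx h !orbT. Qed.

Lemma adjC X Y Z Z' : diff1 Z Z' -> e3c_adj ((X,Y,Z,i0) : V) (X,Y,Z',i0).
Proof. by move=> h; rewrite /e3c_adj /vA /vB /vC /vd /= !eqxx h !orbT. Qed.

Definition phA X0 T (L : seq 'I_r) Y Z : seq V :=
  [seq (upd X0 (take l L) T, Y, Z, i2) | l <- iota 1 (size L)].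
Definition phB Y0 T (L : seq 'I_s) X Z : seq V :=
  [seq (X, upd Y0 (take l L) T, Z, i1) | l <- iota 1 (size L)].

Lemma phA_path X0 T L Y Z : uniq L -> {in L, forall i, tnth X0 i != tnth T i} ->
  path e3c_adj ((X0,Y,Z,i2) : V) (phA X0 T L Y Z).
Proof.
move=> hu hd.
have -> : ((X0,Y,Z,i2) : V) = (upd X0 (take 0 L) T, Y, Z, i2) by rewrite take0 upd_nil.
apply: (path_iota (f := fun l => (upd X0 (take l L) T, Y, Z, i2) : V)) => l _ hl.
rewrite add0n in hl; apply: adjA.
have [x0 _] : exists x0 : 'I_r, True by case: L hu hd hl => // x ?; exists x.
rewrite (take_nth x0) //; apply: diff1_upd; last exact/hd/mem_nth.
have := take_uniq l.+1 hu; rewrite (take_nth x0 hl) rcons_uniq.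
by case/andP.
Qed.

Lemma phB_path Y0 T L X Z : uniq L -> {in L, forall i, tnth Y0 i != tnth T i} ->
  path e3c_adj ((X,Y0,Z,i1) : V) (phB Y0 T L X Z).
Proof.
move=> hu hd.
have -> : ((X,Y0,Z,i1) : V) = (X, upd Y0 (take 0 L) T, Z, i1) by rewrite take0 upd_nil.
apply: (path_iota (f := fun l => (X, upd Y0 (take l L) T, Z, i1) : V)) => l _ hl.
rewrite add0n in hl; apply: adjB.
have [x0 _] : exists x0 : 'I_s, True by case: L hu hd hl => // x ?; exists x.
rewrite (take_nth x0) //; apply: diff1_upd; last exact/hd/mem_nth.
have := take_uniq l.+1 hu; rewrite (take_nth x0 hl) rcons_uniq.
by case/andP.
Qed.

Lemma phA_last X0 T L Y Z x :
  last x (phA X0 T L Y Z) = if L is [::] then x else (upd X0 L T, Y, Z, i2).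
Proof.
case: L => [|i L] //.
rewrite /phA /=.
by rewrite (last_iota_map (fun l => (upd X0 (take l (i::L)) T, Y, Z, i2) : V) 1 (size L)) add1n take_oversize.
Qed.

Lemma phB_last Y0 T L X Z x :
  last x (phB Y0 T L X Z) = if L is [::] then x else (X, upd Y0 L T, Z, i1).
Proof.
case: L => [|i L] //.
rewrite /phB /=.
by rewrite (last_iota_map (fun l => (X, upd Y0 (take l (i::L)) T, Z, i1) : V) 1 (size L)) add1n take_oversize.
Qed.

Lemma phA_lastX X0 T L Y Z :
  last ((X0,Y,Z,i2) : V) (phA X0 T L Y Z) = (upd X0 L T, Y, Z, i2).
Proof. by rewrite phA_last; case: L => //; rewrite upd_nil. Qed.

Lemma phB_lastY Y0 T L X Z :
  last ((X,Y0,Z,i1) : V) (phB Y0 T L X Z) = (X, upd Y0 L T, Z, i1).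
Proof. by rewrite phB_last; case: L => //; rewrite upd_nil. Qed.

Lemma phA_mem X0 T L Y Z x : x \in phA X0 T L Y Z ->
  exists2 l, 0 < l <= size L & x = (upd X0 (take l L) T, Y, Z, i2).
Proof. by case/mapP => l; rewrite mem_iota => hl ->; exists l => //; lia. Qed.

Lemma phB_mem Y0 T L X Z x : x \in phB Y0 T L X Z ->
  exists2 l, 0 < l <= size L & x = (X, upd Y0 (take l L) T, Z, i1).
Proof. by case/mapP => l; rewrite mem_iota => hl ->; exists l => //; lia. Qed.

Lemma phA_feat X0 T L Y Z x : x \in phA X0 T L Y Z -> [/\ vd x = i2, vB x = Y & vC x = Z].
Proof. by case/phA_mem => l _ ->. Qed.

Lemma phB_feat Y0 T L X Z x : x \in phB Y0 T L X Z -> [/\ vd x = i1, vA x = X & vC x = Z].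
Proof. by case/phB_mem => l _ ->. Qed.

Lemma phA_uniq X0 T L Y Z : uniq L -> {in L, forall i, tnth X0 i != tnth T i} ->
  uniq (((X0,Y,Z,i2) : V) :: phA X0 T L Y Z).
Proof.
move=> hu hd.
have -> : ((X0,Y,Z,i2) : V) = (upd X0 (take 0 L) T, Y, Z, i2) by rewrite take0 upd_nil.
apply: (uniq_iota_map (f := fun l => (upd X0 (take l L) T, Y, Z, i2) : V)) => l l' h1 h2.
move/(congr1 (fun x : V => vA x)) => /= e.
move: h1 h2; rewrite add0n => /andP[_ h1] /andP[_ h2].
exact: (upd_take_inj hu hd h1 h2 e).
Qed.

Lemma phB_uniq Y0 T L X Z : uniq L -> {in L, forall i, tnth Y0 i != tnth T i} ->
  uniq (((X,Y0,Z,i1) : V) :: phB Y0 T L X Z).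
Proof.
move=> hu hd.
have -> : ((X,Y0,Z,i1) : V) = (X, upd Y0 (take 0 L) T, Z, i1) by rewrite take0 upd_nil.
apply: (uniq_iota_map (f := fun l => (X, upd Y0 (take l L) T, Z, i1) : V)) => l l' h1 h2.
move/(congr1 (fun x : V => vB x)) => /= e.
move: h1 h2; rewrite add0n => /andP[_ h1] /andP[_ h2].
exact: (upd_take_inj hu hd h1 h2 e).
Qed.

Lemma size_phA X0 T L Y Z : size (phA X0 T L Y Z) = size L.
Proof. by rewrite size_map size_iota. Qed.
Lemma size_phB Y0 T L X Z : size (phB Y0 T L X Z) = size L.
Proof. by rewrite size_map size_iota. Qed.

Lemma phA_featc X0 T L Y Z x : x \in ((X0,Y,Z,i2) : V) :: phA X0 T L Y Z ->
  [/\ vd x = i2, vB x = Y & vC x = Z].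
Proof. by rewrite inE => /orP[/eqP->|/phA_feat]. Qed.

Lemma phB_featc Y0 T L X Z x : x \in ((X,Y0,Z,i1) : V) :: phB Y0 T L X Z ->
  [/\ vd x = i1, vA x = X & vC x = Z].
Proof. by rewrite inE => /orP[/eqP->|/phB_feat]. Qed.

Lemma uniq_catP (T : eqType) (s1 s2 : seq T) : uniq s1 -> uniq s2 ->
  (forall x, x \in s1 -> x \in s2 -> False) -> uniq (s1 ++ s2).
Proof.
move=> h1 h2 H; rewrite cat_uniq h1 h2 andbT /=; apply/hasPn => x hx.
by apply/negP => hx'; apply: (H x).
Qed.

Lemma phA_memc X0 T L Y Z x : x \in ((X0,Y,Z,i2) : V) :: phA X0 T L Y Z ->
  exists2 l, l <= size L & x = (upd X0 (take l L) T, Y, Z, i2).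
Proof.
rewrite inE => /orP[/eqP->|/phA_mem[l /andP[_ hl] ->]]; last by exists l.
by exists 0; rewrite ?take0 ?upd_nil.
Qed.

End Graph.

Definition cstr n (c : 'I_3) : n.-tuple 'I_3 := [tuple c | _ < n].
Definition nxt (k : 'I_3) : 'I_3 := if k == i0 then i1 else i0.

Lemma tnth_cstr n c i : tnth (cstr n c) i = c.
Proof. by rewrite tnth_mktuple. Qed.

Lemma upd1_neq n (X : n.-tuple 'I_3) p c : c != tnth X p -> X != upd X [:: p] (cstr n c).
Proof.
move=> h; apply/eqP => e; move/eqP: h; apply.
by rewrite [in RHS]e tnth_upd inE eqxx tnth_cstr.
Qed.

Lemma upd1_diff n (X : n.-tuple 'I_3) p c : c != tnth X p -> diff1 X (upd X [:: p] (cstr n c)).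
Proof. by move=> h; apply: diff1_upd1; rewrite tnth_cstr eq_sym. Qed.

Lemma mem_take_drop (T : eqType) (s : seq T) m x : uniq s -> x \in take m s -> x \notin drop m s.
Proof.
move=> hu ht; have := hu; rewrite -{1}(cat_take_drop m s) cat_uniq => /and3P[_ /hasPn H _].
by apply/negP => hd; move: (H x hd); rewrite ht.
Qed.

Lemma mem_take_or_drop (T : eqType) (s : seq T) m x : x \in s -> (x \in take m s) || (x \in drop m s).
Proof. by rewrite -mem_cat cat_take_drop. Qed.

Lemma upd_fixE n (X T : n.-tuple 'I_3) S i :
  (tnth (upd X S T) i == tnth T i) = (i \in S) || (tnth X i == tnth T i).
Proof. by rewrite tnth_upd; case: (i \in S); rewrite ?eqxx. Qed.

Section Main.
Variables r s t : nat.
Local Notation V := (vert r s t).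
Variables (A A' : r.-tuple 'I_3) (B B' : s.-tuple 'I_3).
Hypotheses (hA : A != A') (hB : B != B').

Local Notation D := (dl A A').
Local Notation E := (dl B B').

Lemma hdD : {in D, forall i, tnth A i != tnth A' i}.
Proof. by move=> i; rewrite mem_dl. Qed.
Lemma hdE : {in E, forall i, tnth B i != tnth B' i}.
Proof. by move=> i; rewrite mem_dl. Qed.
Lemma updD : upd A D A' = A'.
Proof. exact: upd_cover. Qed.
Lemma updE : upd B E B' = B'.
Proof. exact: upd_cover. Qed.
Lemma hB' : (B == B') = false.
Proof. exact: negbTE. Qed.
Lemma hA' : (A == A') = false.
Proof. exact: negbTE. Qed.

Definition Gt (Z : t.-tuple 'I_3) : seq V :=
  phA A A' D B Z ++ (A',B,Z,i1) :: phB B B' E A' Z.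

Lemma Gt_path Z : path e3c_adj ((A,B,Z,i2) : V) (Gt Z).
Proof.
rewrite cat_path (phA_path B Z (uniq_dl A A') hdD) /=.
rewrite (phA_lastX A A' D B Z) updD adjE0 //=.
exact: (phB_path A' Z (uniq_dl B B') hdE).
Qed.

Lemma Gt_last Z x : last x (Gt Z) = (A',B',Z,i1).
Proof. by rewrite last_cat /= phB_lastY updE. Qed.

Lemma Gt_feat Z x : x \in ((A,B,Z,i2) : V) :: Gt Z -> vC x = Z /\ vd x != i0.
Proof.
rewrite -cat_cons mem_cat => /orP[/phA_featc[-> _ ->]|/phB_featc[-> _ ->]] //.
Qed.

Lemma Gt_uniq Z : uniq (((A,B,Z,i2) : V) :: Gt Z).
Proof.
rewrite -cat_cons; apply: uniq_catP.
- exact: (phA_uniq B Z (uniq_dl A A') hdD).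
- exact: (phB_uniq A' Z (uniq_dl B B') hdE).
by move=> x /phA_featc[h _ _] /phB_featc[h' _ _]; rewrite h in h'.
Qed.

Lemma size_Gt Z : size (Gt Z) = size D + size E + 1.
Proof. by rewrite size_cat /= size_phA size_phB; lia. Qed.

Variable C : t.-tuple 'I_3.
Variable x0 : 'I_r.
Local Notation u2 := ((A,B,C,i2) : V).
Local Notation v2 := ((A',B',C,i2) : V).
Local Notation a := (size D).

Definition X1 m := upd A (drop m D) A'.
Definition P m : seq V :=
  phA A A' (drop m D) B C ++ (X1 m, B, C, i1) :: phB B B' E (X1 m) C ++
  (X1 m, B', C, i2) :: phA (X1 m) A' (take m D) B' C.

Lemma hd_drop m : {in drop m D, forall i, tnth A i != tnth A' i}.
Proof. by move=> i /mem_drop; apply: hdD. Qed.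

Lemma hd_X1 m : {in take m D, forall i, tnth (X1 m) i != tnth A' i}.
Proof.
move=> i hi; rewrite /X1 tnth_upd (negbTE (mem_take_drop (uniq_dl A A') hi)).
by apply: hdD; apply: mem_take hi.
Qed.

Lemma X1_last m : upd (X1 m) (take m D) A' = A'.
Proof.
apply: upd_cover => i; rewrite mem_dl /X1 tnth_upd.
case: ifP => hd; first by rewrite eqxx.
move=> h; have hi : i \in D by rewrite mem_dl.
by move: (mem_take_or_drop m hi); rewrite hd orbF.
Qed.

Lemma P_path m : path e3c_adj u2 (P m).
Proof.
rewrite /P cat_path (phA_path B C (drop_uniq m (uniq_dl A A')) (@hd_drop m)) /=.
rewrite (phA_lastX A A' (drop m D) B C) adjE0 //= cat_path.
rewrite (phB_path (X1 m) C (uniq_dl B B') hdE) /=.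
rewrite (phB_lastY B B' E (X1 m) C) updE adjE0 //=.
exact: (phA_path B' C (take_uniq m (uniq_dl A A')) (@hd_X1 m)).
Qed.

Lemma P_last m : last u2 (P m) = v2.
Proof.
rewrite /P last_cat /= last_cat /=.
by rewrite (phA_lastX (X1 m) A' (take m D) B' C) X1_last.
Qed.

Lemma P_uniq m : uniq (u2 :: P m).
Proof.
rewrite /P -cat_cons; apply: uniq_catP.
- exact: (phA_uniq B C (drop_uniq m (uniq_dl A A')) (@hd_drop m)).
- rewrite -cat_cons; apply: uniq_catP.
  + exact: (phB_uniq (X1 m) C (uniq_dl B B') hdE).
  + exact: (phA_uniq B' C (take_uniq m (uniq_dl A A')) (@hd_X1 m)).
  by move=> x /phB_featc[h _ _] /phA_featc[h' _ _]; rewrite h in h'.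
move=> x /phA_featc[h hb _]; rewrite -cat_cons mem_cat.
case/orP => [/phB_featc[h' _ _]|/phA_featc[_ hb' _]]; first by rewrite h in h'.
by move: hB; rewrite -hb -hb' eqxx.
Qed.

Lemma P_size m : m <= a -> size (P m) = a + size E + 2.
Proof.
move=> hm; rewrite /P size_cat /= size_cat /= !size_phA size_phB size_drop size_takel //.
lia.
Qed.

Definition pat (X : r.-tuple 'I_3) j := tnth X (nth x0 D j) == tnth A' (nth x0 D j).

Lemma idx_take j l : j < a -> (nth x0 D j \in take l D) = (j < l).
Proof. by move=> hj; rewrite (in_take _ (mem_nth x0 hj)) index_uniq // uniq_dl. Qed.

Lemma idx_drop j m : j < a -> (nth x0 D j \in drop m D) = (m <= j).
Proof.
move=> hj; have := mem_take_or_drop m (mem_nth x0 hj); rewrite idx_take //.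
case: (ltnP j m) => h /=; last by move=> ->.
have : nth x0 D j \in take m D by rewrite idx_take.
by move/(mem_take_drop (uniq_dl A A'))/negbTE => ->.
Qed.

Lemma idx_tkdr j l m : j < a -> (nth x0 D j \in take l (drop m D)) = (m <= j < l + m).
Proof.
move=> hj; rewrite take_drop.
have hu : uniq (take (l + m) D) by apply: take_uniq; apply: uniq_dl.
have ht : nth x0 D j \in take (l + m) D = (j < l + m) by rewrite idx_take.
case: (boolP (nth x0 D j \in take (l + m) D)) => hin.
  have := mem_take_or_drop m hin; rewrite take_takel ?leq_addl // idx_take //.
  case: (ltnP j m) => h /=.
    have : nth x0 D j \in take m (take (l + m) D) by rewrite take_takel ?leq_addl // idx_take.
    by move/(mem_take_drop hu)/negbTE => ->.
  by move=> ->; move: ht; rewrite hin => <-.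
have hf : (j < l + m) = false by rewrite -ht (negbTE hin).
rewrite hf andbF; apply/negbTE; apply: contra hin; exact: mem_drop.
Qed.

Lemma pat_upd S j : j < a -> pat (upd A S A') j = (nth x0 D j \in S).
Proof.
move=> hj; rewrite /pat upd_fixE.
by rewrite (negbTE (hdD (mem_nth x0 hj))) orbF.
Qed.

Lemma pat_upd2 S S' j : j < a -> pat (upd (upd A S A') S' A') j = (nth x0 D j \in S') || (nth x0 D j \in S).
Proof. by move=> hj; rewrite /pat upd_fixE -/(pat _ j) pat_upd. Qed.

Lemma P_desc m x : m <= a -> x \in P m -> x != v2 ->
  [\/ [/\ vd x = i2, vB x = B & exists2 l, 0 < l <= a - m &
          forall j, j < a -> pat (vA x) j = (m <= j < l + m)],
      vd x = i1 /\ (forall j, j < a -> pat (vA x) j = (m <= j))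
    | [/\ vd x = i2, vB x = B' & exists2 l, l < m &
          forall j, j < a -> pat (vA x) j = (j < l) || (m <= j)]].
Proof.
move=> hm; rewrite /P mem_cat => /orP[|]; last rewrite -cat_cons mem_cat => /orP[|].
- case/phA_mem => l; rewrite size_drop => hl -> _; apply: Or31; split => //.
  by exists l => // j hj; rewrite /= pat_upd // idx_tkdr.
- case/phB_featc => -> -> _ _; apply: Or32; split => // j hj.
  by rewrite /X1 pat_upd // idx_drop.
case/phA_memc => l; rewrite size_takel // => hl -> hx.
apply: Or33; split => //; exists l.
  rewrite ltn_neqAle hl andbT; apply: contra hx => /eqP e.
  by rewrite e take_takel // X1_last.
by move=> j hj; rewrite /= /X1 pat_upd2 // take_takel // idx_take // idx_drop.
Qed.

Lemma P_P m m' x : m <= a -> m' <= a -> m != m' ->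
  x \in P m -> x != v2 -> x \in P m' -> x != v2 -> False.
Proof.
move=> hm hm' hmm h1 h1' h2 h2'.
case: (P_desc hm h1 h1') => [[d1 b1 [l hl H]]|[d1 H]|[d1 b1 [l hl H]]];
case: (P_desc hm' h2 h2') => [[d2 b2 [l' hl' H']]|[d2 H']|[d2 b2 [l' hl' H']]].
- have hj : minn m m' < a by lia.
  have := H _ hj; rewrite H' //; lia.
- by rewrite d1 in d2.
- by move: hB; rewrite -b1 -b2 eqxx.
- by rewrite d1 in d2.
- have hj : minn m m' < a by lia.
  have := H _ hj; rewrite H' //; lia.
- by rewrite d1 in d2.
- by move: hB; rewrite -b1 -b2 eqxx.
- by rewrite d1 in d2.
- have hj : (maxn m m').-1 < a by lia.
  have := H _ hj; rewrite H' //; lia.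
Qed.

Definition untw (X : r.-tuple 'I_3) i := (tnth X i == tnth A i) || (tnth X i == tnth A' i).

Lemma untw_A i : untw A i.
Proof. by rewrite /untw eqxx. Qed.

Lemma untw_upd X S i : untw X i -> untw (upd X S A') i.
Proof. by rewrite /untw tnth_upd; case: (i \in S) => //; rewrite eqxx orbT. Qed.

Lemma P_untw m x i : x \in P m -> untw (vA x) i.
Proof.
rewrite /P mem_cat => /orP[/phA_mem[l _ ->]|]; first exact/untw_upd/untw_A.
rewrite -cat_cons mem_cat => /orP[/phB_featc[_ -> _]|/phA_memc[l _ ->]] /=;
  rewrite /X1; by repeat apply: untw_upd; apply: untw_A.
Qed.

Lemma P_feat m x : x \in P m -> vC x = C /\ vd x != i0.
Proof.
rewrite /P mem_cat => /orP[/phA_feat[-> _ ->]|] //.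
by rewrite -cat_cons mem_cat => /orP[/phB_featc[-> _ ->]|/phA_featc[-> _ ->]].
Qed.

Section Tw.
Variables (p : 'I_r) (c : 'I_3).

Definition Xt := upd A [:: p] (cstr r c).
Definition L3 := [seq i <- D | i != p] ++ [:: p].
Definition Tw : seq V :=
  (Xt,B,C,i2) :: (Xt,B,C,i1) :: phB B B' E Xt C ++ (Xt,B',C,i2) :: phA Xt A' L3 B' C.

Hypotheses (hc : c != tnth A p) (hc' : c != tnth A' p).

Lemma tnth_Xt i : tnth Xt i = if i == p then c else tnth A i.
Proof. by rewrite /Xt tnth_upd inE tnth_cstr. Qed.

Lemma p_notin : p \notin [seq i <- D | i != p].
Proof. by rewrite mem_filter eqxx. Qed.

Lemma L3_uniq : uniq L3.
Proof.
rewrite /L3 cat_uniq filter_uniq ?uniq_dl //= orbF andbT.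
exact: p_notin.
Qed.

Lemma hd_L3 : {in L3, forall i, tnth Xt i != tnth A' i}.
Proof.
move=> i; rewrite mem_cat inE mem_filter tnth_Xt.
case: (eqVneq i p) => [->|hip] //=; rewrite orbF; exact: hdD.
Qed.

Lemma Xt_last : upd Xt L3 A' = A'.
Proof.
apply: upd_cover => i; rewrite mem_dl tnth_Xt mem_cat inE mem_filter.
by case: (eqVneq i p) => //= _ h; rewrite mem_dl h.
Qed.

Lemma Tw_path : path e3c_adj u2 Tw.
Proof.
rewrite /Tw /= adjA ?upd1_diff // adjE0 //= cat_path.
rewrite (phB_path Xt C (uniq_dl B B') hdE) /=.
rewrite (phB_lastY B B' E Xt C) updE adjE0 //=.
exact: (phA_path B' C L3_uniq hd_L3).
Qed.

Lemma Tw_last : last u2 Tw = v2.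
Proof. by rewrite /Tw /= last_cat /= (phA_lastX Xt A' L3 B' C) Xt_last. Qed.

Lemma A_Xt : A != Xt.
Proof. exact: upd1_neq. Qed.

Lemma Tw_uniq : uniq (u2 :: Tw).
Proof.
rewrite /Tw -[u2 :: _]/([:: u2; (Xt,B,C,i2)] ++ ((Xt,B,C,i1) :: phB B B' E Xt C ++
   (Xt,B',C,i2) :: phA Xt A' L3 B' C)).
apply: uniq_catP.
- rewrite /= inE andbT; apply: contra_neq A_Xt => e.
  exact: (congr1 (fun x : V => vA x) e).
- rewrite -cat_cons; apply: uniq_catP.
  + exact: (phB_uniq Xt C (uniq_dl B B') hdE).
  + exact: (phA_uniq B' C L3_uniq hd_L3).
  by move=> x /phB_featc[h _ _] /phA_featc[h' _ _]; rewrite h in h'.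
move=> x hx; have [hd hb] : vd x = i2 /\ vB x = B.
  by move: hx; rewrite !inE => /orP[]/eqP->.
rewrite -cat_cons mem_cat => /orP[/phB_featc[h' _ _]|/phA_featc[_ hb' _]].
  by rewrite hd in h'.
by move: hB; rewrite -hb -hb' eqxx.
Qed.

Lemma Tw_size : size Tw <= a + size E + 4.
Proof.
rewrite /Tw /= size_cat /= size_phB size_phA /L3 size_cat /= size_filter.
have := count_size (fun i : 'I_r => i != p) D; lia.
Qed.

Lemma Tw_feat x : x \in Tw -> x != v2 ->
  [/\ vC x = C, vd x != i0, tnth (vA x) p = c & forall i, i != p -> untw (vA x) i].
Proof.
have Xu : forall i, i != p -> untw Xt i.
  by move=> i hi; rewrite /untw tnth_Xt (negbTE hi) eqxx.
have Xp : tnth Xt p = c by rewrite tnth_Xt eqxx.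
rewrite /Tw -[_ :: _]/([:: (Xt,B,C,i2)] ++ ((Xt,B,C,i1) :: phB B B' E Xt C ++
   (Xt,B',C,i2) :: phA Xt A' L3 B' C)) mem_cat.
case/orP => [|]; first by rewrite inE => /eqP-> _.
rewrite -cat_cons mem_cat => /orP[/phB_featc[-> -> ->] _|] //.
case/phA_memc => l hl -> hx /=; split => //.
  have hl' : l < size L3.
    rewrite ltn_neqAle hl andbT; apply: contra hx => /eqP->.
    by rewrite take_size Xt_last.
  have hpn : p \notin take l L3.
    have pL : p \in L3 by rewrite mem_cat inE eqxx orbT.
    rewrite (in_take _ pL).
    rewrite /L3 index_cat (negbTE p_notin) /= eqxx addn0 -leqNgt.
    by move: hl'; rewrite /L3 size_cat /= addn1 ltnS.
  by rewrite tnth_upd (negbTE hpn).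
by move=> i hi; apply/untw_upd/Xu.
Qed.

End Tw.

Variable q0 : 'I_t.
Definition Ct : t.-tuple 'I_3 := upd C [:: q0] (cstr t (nxt (tnth C q0))).

Lemma C_Ct : diff1 C Ct.
Proof. by apply: upd1_diff; apply: nxt_neq. Qed.

Lemma C_Ct_neq : C != Ct.
Proof. by apply: upd1_neq; apply: nxt_neq. Qed.

Definition Q0 : seq V :=
  (A,B,C,i0) :: (A,B,Ct,i0) :: (A,B,Ct,i2) :: Gt Ct ++ [:: (A',B',Ct,i0); (A',B',C,i0); v2].

Lemma Q0_path : path e3c_adj u2 Q0.
Proof.
rewrite /Q0 /= adjE0 // adjC ?C_Ct // adjE0 //= cat_path Gt_path Gt_last /=.
by rewrite adjE0 // adjC ?adjE0 // diff1_sym C_Ct.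
Qed.

Lemma Q0_last : last u2 Q0 = v2.
Proof. by rewrite /Q0 /= last_cat. Qed.

Lemma Q0_size : size Q0 = a + size E + 7.
Proof. by rewrite /Q0 /= size_cat size_Gt /=; lia. Qed.

Lemma Q0_feat x : x \in Q0 -> x != v2 -> (vC x != C) || (vd x == i0).
Proof.
rewrite /Q0 -[_ :: _]/([:: (A,B,C,i0); (A,B,Ct,i0)] ++ (((A,B,Ct,i2) :: Gt Ct) ++
   [:: (A',B',Ct,i0); (A',B',C,i0); v2])) !mem_cat.
have nC : (Ct == C) = false by rewrite eq_sym; apply/negbTE/C_Ct_neq.
case/or3P => [|/Gt_feat[-> _]|]; rewrite ?nC //.
  by rewrite !inE => /orP[]/eqP-> _; rewrite eqxx orbT.
by rewrite !inE => /or3P[]/eqP->; rewrite ?eqxx ?orbT.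
Qed.

Lemma vneq (T : eqType) (f : V -> T) (x y : V) : f x != f y -> x != y.
Proof. by apply: contra_neq => ->. Qed.

Lemma uniq3v (a b c : V) : a != b -> a != c -> b != c -> uniq [:: a; b; c].
Proof. by move=> h1 h2 h3; rewrite /= !inE !negb_or h1 h2 h3. Qed.

Lemma nC : (C == Ct) = false.
Proof. by apply/negbTE/C_Ct_neq. Qed.

Lemma veqF (x y : V) : x = y ->
  [|| vd x != vd y, vA x != vA y, vB x != vB y | vC x != vC y] -> False.
Proof. by move=> ->; rewrite !eqxx. Qed.

Ltac vcon e :=
  apply: (veqF e); rewrite /= ?hA ?hB ?orbT //;
  rewrite ?nC ?[_ == C]eq_sym ?nC ?orbT //.

Lemma vne (x y : V) : (x = y -> False) -> x != y.
Proof. by move=> h; apply/eqP. Qed.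

Lemma Q0_uniq : uniq (u2 :: Q0).
Proof.
rewrite /Q0 -[u2 :: _]/([:: u2; (A,B,C,i0); (A,B,Ct,i0)] ++ (((A,B,Ct,i2) :: Gt Ct) ++
   [:: (A',B',Ct,i0); (A',B',C,i0); v2])).
apply: uniq_catP.
- by apply: uniq3v; apply: vne => e; vcon e.
- apply: uniq_catP; first exact: Gt_uniq.
  + by apply: uniq3v; apply: vne => e; vcon e.
  move=> x /Gt_feat[hc hd]; rewrite !inE => /or3P[]/eqP ex; rewrite ex /= in hc hd => //.
  by move: hc nC; rewrite /vC /= => ->; rewrite eqxx.
move=> x hx; rewrite mem_cat => /orP[hG|hT]; move: hx; rewrite !inE => /or3P[]/eqP ex; subst x.
all: try (case/Gt_feat: hG; rewrite /vC /vd /= => hc hd;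
          first [done | by move: nC; rewrite hc eqxx | by move: hd; rewrite eqxx]).
all: move: hT; rewrite !inE => /or3P[]/eqP e; vcon e.
Qed.

Definition fw (p : 'I_r) := [seq c <- [:: i0; i1; i2] | (c != tnth A p) && (c != tnth A' p)].
Definition TWL := [seq (p, c) | p <- enum 'I_r, c <- fw p].
Definition Lab2 := option (nat + ('I_r * 'I_3)).
Definition pth2 (l : Lab2) : seq V :=
  match l with Some (inl m) => P m | Some (inr pc) => Tw pc.1 pc.2 | None => Q0 end.
Definition labs2 : seq Lab2 :=
  [seq Some (inl m) | m <- iota 0 a.+1] ++ [seq Some (inr pc) | pc <- TWL] ++ [:: None].

Lemma TWL_size : a + size TWL = 2 * r.
Proof.
rewrite size_allpairs_dep.
have -> : [seq size (fw p) | p <- enum 'I_r] =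
    [seq (if tnth A p != tnth A' p then 1 else 2) | p <- enum 'I_r].
  by apply: eq_map => p; rewrite /fw cnt3.
have := sum_count (fun p => tnth A p != tnth A' p) (enum 'I_r).
rewrite size_enum_ord /dl size_filter; lia.
Qed.

Lemma TWL_mem p c : (p, c) \in TWL -> (c != tnth A p) && (c != tnth A' p).
Proof.
case/allpairsPdep => p' [c' [_ hc [-> ->]]].
by move: hc; rewrite mem_filter => /andP[].
Qed.

Lemma TWL_uniq : uniq TWL.
Proof. apply: uniq_pairs; [exact: enum_uniq | move=> p; exact: uniq3]. Qed.

Lemma labs2_uniq : uniq labs2.
Proof.
apply: uniq_catP.
- by rewrite map_inj_uniq ?iota_uniq // => ? ? [].
- apply: uniq_catP => //.
  + by rewrite map_inj_uniq ?TWL_uniq // => ? ? [].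
  + by move=> x /mapP[? _ ->].
by move=> x /mapP[? _ ->]; rewrite mem_cat => /orP[/mapP[? _]|].
Qed.

Lemma labs2_size : size labs2 = 2 * r + 2.
Proof. rewrite /labs2 !size_cat !size_map size_iota /=; have := TWL_size. by move=> <-; rewrite addSn addn1 addnS addn2. Qed.

Lemma lab_inl m : Some (inl m) \in labs2 -> m <= a.
Proof.
rewrite mem_cat => /orP[/mapP[m' hm [->]]|]; first by move: hm; rewrite mem_iota; lia.
by rewrite mem_cat => /orP[/mapP[? _]|].
Qed.

Lemma lab_inr p c : Some (inr (p, c)) \in labs2 -> (c != tnth A p) && (c != tnth A' p).
Proof.
rewrite mem_cat => /orP[/mapP[? _]//|].
rewrite mem_cat => /orP[/mapP[pc hm [e]]|] //; rewrite -e in hm; exact: TWL_mem.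
Qed.

Lemma pth2_props l : l \in labs2 ->
  [/\ path e3c_adj u2 (pth2 l), last u2 (pth2 l) = v2, uniq (u2 :: pth2 l)
     & size (pth2 l) <= a + size E + 7].
Proof.
case: l => [[m|[p c]]|] /=.
- move/lab_inl => hm; split; [exact: P_path | exact: P_last | exact: P_uniq | rewrite P_size //; lia].
- move/lab_inr => /andP[hc hc']; split.
  + exact: Tw_path.
  + exact: Tw_last.
  + exact: Tw_uniq.
  + by apply: leq_trans (Tw_size hc hc') _; rewrite leq_add2l.
- move=> _; split; [exact: Q0_path | exact: Q0_last | exact: Q0_uniq | ]. rewrite size_cat size_Gt /=. lia.
Qed.

Lemma conf_PT m p c x : c != tnth A p -> c != tnth A' p ->
  x \in P m -> x \in Tw p c -> x != v2 -> False.
Proof.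
move=> hc hc' hP hT hx; have := P_untw p hP; rewrite /untw; case: (Tw_feat hT hx) => _ _ -> _.
by rewrite /untw (negbTE hc) (negbTE hc').
Qed.

Lemma conf_TT p c p' c' x : (p, c) != (p', c') ->
  c != tnth A p -> c != tnth A' p ->
  x \in Tw p c -> x != v2 -> x \in Tw p' c' -> x != v2 -> False.
Proof.
move=> hne hc hc' h1 h1' h2 h2'.
case: (Tw_feat h1 h1') => _ _ e1 _; case: (Tw_feat h2 h2') => _ _ e2 U.
case: (eqVneq p p') => [ep|np].
  by move: hne; rewrite ep -e2 -e1 ep eqxx.
by move: (U p np); rewrite /untw e1 (negbTE hc) (negbTE hc').
Qed.

Lemma conf_Q x : x \in Q0 -> x != v2 -> vC x = C -> vd x != i0 -> False.
Proof. by move=> h1 h2 hc hd; move: (Q0_feat h1 h2); rewrite hc eqxx (negbTE hd). Qed.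

Lemma pth2_conf l l' : l \in labs2 -> l' \in labs2 -> l != l' ->
  forall x, x \in pth2 l -> x != v2 -> x \in pth2 l' -> x != v2 -> False.
Proof.
case: l => [[m|[p c]]|]; case: l' => [[m'|[p' c']]|] //= hl hl' hne x h1 h1' h2 h2'.
- apply: (P_P (lab_inl hl) (lab_inl hl') _ h1 h1' h2 h2').
  by apply: contra hne => /eqP->.
- by case/andP: (lab_inr hl') => hc hc'; apply: (conf_PT hc hc' h1 h2).
- by case: (P_feat h1) => hc hd; apply: (conf_Q h2 h2' hc hd).
- by case/andP: (lab_inr hl) => hc hc'; apply: (conf_PT hc hc' h2 h1).
- case/andP: (lab_inr hl) => hc hc'; apply: (conf_TT _ hc hc' h1 h1' h2 h2').
  by apply: contra hne => /eqP [-> ->].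
- by case: (Tw_feat h1 h1') => hc hd _ _; apply: (conf_Q h2 h2' hc hd).
- by case: (P_feat h2) => hc hd; apply: (conf_Q h1 h1' hc hd).
- by case: (Tw_feat h2 h2') => hc hd _ _; apply: (conf_Q h1 h1' hc hd).
Qed.

Lemma d2_paths : exists ps : seq (seq V),
  [/\ size ps = 2 * r + 2, (forall p, p \in ps -> is_uv_path u2 v2 p), int_disjoint ps
     & forall p, p \in ps -> size p <= r + s + 7].
Proof.
exists (map pth2 labs2); split.
- by rewrite size_map labs2_size.
- move=> p /mapP[l hl ->]; case: (pth2_props hl) => h1 h2 h3 _.
  by rewrite /is_uv_path h1 h2 eqxx h3.
- apply: int_disjoint_pairwise; apply: pairwise_lab; first exact: labs2_uniq.
  move=> l l' hl hl' hne; case: (pth2_props hl) => _ l1 u1 _; case: (pth2_props hl') => _ l2 u3 _.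
  apply: (disjI u1 l1 u3 l2) => x; exact: (pth2_conf hl hl' hne).
- move=> p /mapP[l hl ->]; case: (pth2_props hl) => _ _ _ h; apply: leq_trans h _.
  have := size_dl A A'; have := size_dl B B'; lia.
Qed.

Local Notation u0 := ((A,B,C,i0) : V).
Local Notation v0 := ((A',B',C,i0) : V).

Definition R1 : seq V :=
  (A,B,C,i1) :: phB B B' E A C ++ (A,B',C,i2) :: phA A A' D B' C ++ [:: v0].
Definition R2 : seq V := (A,B,C,i2) :: Gt C ++ [:: v0].
Definition Cq q c : t.-tuple 'I_3 := upd C [:: q] (cstr t c).
Definition TC q c : seq V :=
  (A,B,Cq q c,i0) :: (A,B,Cq q c,i2) :: Gt (Cq q c) ++ [:: (A',B',Cq q c,i0); v0].

Lemma R1_path : path e3c_adj u0 R1.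
Proof.
rewrite /R1 /= adjE0 //= cat_path (phB_path A C (uniq_dl B B') hdE) /=.
rewrite (phB_lastY B B' E A C) updE adjE0 //= cat_path (phA_path B' C (uniq_dl A A') hdD) /=.
by rewrite (phA_lastX A A' D B' C) updD adjE0.
Qed.

Lemma R1_last : last u0 R1 = v0.
Proof. by rewrite /R1 /= last_cat /= last_cat. Qed.

Lemma R1_uniq : uniq (u0 :: R1).
Proof.
rewrite /R1 -[u0 :: _]/([:: u0] ++ (((A,B,C,i1) :: phB B B' E A C) ++
   (((A,B',C,i2) :: phA A A' D B' C) ++ [:: v0]))).
apply: uniq_catP => //.
- apply: uniq_catP; first exact: (phB_uniq A C (uniq_dl B B') hdE).
  + apply: uniq_catP => //; first exact: (phA_uniq B' C (uniq_dl A A') hdD).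
    by move=> x /phA_featc[h _ _]; rewrite inE => /eqP ex; rewrite ex in h.
  move=> x /phB_featc[h _ _]; rewrite mem_cat => /orP[/phA_featc[h' _ _]|].
    by rewrite h in h'.
  by rewrite inE => /eqP ex; rewrite ex in h.
move=> x; rewrite inE => /eqP ->; rewrite mem_cat => /orP[/phB_featc[h _ _] //|].
rewrite mem_cat => /orP[/phA_featc[h _ _] //|].
by rewrite inE => /eqP/(congr1 (fun x : V => vA x)); rewrite /vA /= => e; move: hA; rewrite e eqxx.
Qed.

Lemma R1_size : size R1 = a + size E + 3.
Proof. rewrite /R1 /= size_cat /= size_cat /= size_phA size_phB; lia. Qed.

Lemma R1_feat x : x \in R1 -> x != v0 ->
  vC x = C /\ ((vd x == i1) && (vA x == A) || (vd x == i2) && (vB x == B')).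
Proof.
rewrite /R1 -cat_cons mem_cat => /orP[/phB_featc[-> -> ->] _|]; first by rewrite !eqxx.
rewrite -cat_cons mem_cat => /orP[/phA_featc[-> -> ->] _|]; first by rewrite !eqxx orbT.
by rewrite inE => /eqP->; rewrite eqxx.
Qed.

Lemma R2_path : path e3c_adj u0 R2.
Proof.
rewrite /R2 /= adjE0 //= cat_path Gt_path Gt_last /=.
by rewrite adjE0.
Qed.

Lemma R2_last : last u0 R2 = v0.
Proof. by rewrite /R2 /= last_cat. Qed.

Lemma R2_uniq : uniq (u0 :: R2).
Proof.
rewrite /R2 -[u0 :: _]/([:: u0] ++ (((A,B,C,i2) :: Gt C) ++ [:: v0])).
apply: uniq_catP => //.
- apply: uniq_catP => //; first exact: Gt_uniq.
  by move=> x /Gt_feat[_ h]; rewrite inE => /eqP ex; rewrite ex eqxx in h.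
move=> x; rewrite inE => /eqP ->; rewrite mem_cat => /orP[/Gt_feat[_ h]|].
  by rewrite eqxx in h.
by rewrite inE => /eqP/(congr1 (fun x : V => vA x)); rewrite /vA /= => e; move: hA; rewrite e eqxx.
Qed.

Lemma R2_size : size R2 = a + size E + 3.
Proof. rewrite /R2 /= size_cat size_Gt /=; lia. Qed.

Lemma R2_feat x : x \in R2 -> x != v0 ->
  vC x = C /\ ((vd x == i2) && (vB x == B) || (vd x == i1) && (vA x == A')).
Proof.
rewrite /R2 -cat_cons /Gt -cat_cons !mem_cat -orbA.
case/or3P => [/phA_featc[-> -> ->] _|/phB_featc[-> -> ->] _|]; first by rewrite !eqxx.
  by rewrite !eqxx orbT.
by rewrite inE => /eqP->; rewrite eqxx.
Qed.

Section TCs.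
Variables (q : 'I_t) (c : 'I_3).
Hypothesis hc : c != tnth C q.

Lemma nCq : (C == Cq q c) = false.
Proof. by apply/negbTE/upd1_neq. Qed.

Lemma TC_path : path e3c_adj u0 (TC q c).
Proof.
rewrite /TC /= adjC ?upd1_diff // adjE0 //= cat_path Gt_path Gt_last /=.
by rewrite adjE0 // adjC // diff1_sym upd1_diff.
Qed.

Lemma TC_last : last u0 (TC q c) = v0.
Proof. by rewrite /TC /= last_cat. Qed.

Lemma TC_size : size (TC q c) = a + size E + 5.
Proof. rewrite /TC /= size_cat size_Gt /=; lia. Qed.

Lemma TC_feat x : x \in TC q c -> x != v0 -> vC x = Cq q c.
Proof.
rewrite /TC -[_ :: _]/([:: (A,B,Cq q c,i0)] ++ (((A,B,Cq q c,i2) :: Gt (Cq q c)) ++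
   [:: (A',B',Cq q c,i0); v0])) !mem_cat.
case/or3P => [|/Gt_feat[-> _]|] //; first by rewrite inE => /eqP->.
by rewrite !inE => /orP[]/eqP->; rewrite ?eqxx.
Qed.

Lemma TC_uniq : uniq (u0 :: TC q c).
Proof.
have nC := nCq.
rewrite /TC -[u0 :: _]/([:: u0; (A,B,Cq q c,i0)] ++ (((A,B,Cq q c,i2) :: Gt (Cq q c)) ++
   [:: (A',B',Cq q c,i0); v0])).
apply: uniq_catP.
- rewrite /= inE andbT; apply: vne => e; apply: (veqF e).
  by rewrite /vA /vB /vC /vd /= nC ?orbT.
- apply: uniq_catP; first exact: Gt_uniq.
  + rewrite /= inE andbT; apply: vne => e; apply: (veqF e).
    by rewrite /vA /vB /vC /vd /= eq_sym nC ?orbT.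
  move=> x /Gt_feat[hc' hd]; rewrite !inE => /orP[]/eqP ex; subst x.
  + by move: hd; rewrite /vd /= ?eqxx.
  + by move: hd; rewrite /vd /= ?eqxx.
move=> x hx; rewrite mem_cat => /orP[hG|hT]; move: hx; rewrite !inE => /orP[]/eqP ex; subst x.
- by case/Gt_feat: hG; rewrite /vC /= => e _; move: nC; rewrite e eqxx.
- by case/Gt_feat: hG; rewrite /vd /=.
- move: hT; rewrite !inE => /orP[]/eqP e; apply: (veqF e).
  + by rewrite /vA /vB /vC /vd /= hA ?orbT.
  + by rewrite /vA /vB /vC /vd /= hA ?orbT.
- move: hT; rewrite !inE => /orP[]/eqP e; apply: (veqF e).
  + by rewrite /vA /vB /vC /vd /= hA ?orbT.
  + by rewrite /vA /vB /vC /vd /= hA ?orbT.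
Qed.

End TCs.

Lemma Cq_inj q c q' c' : c != tnth C q -> (q, c) != (q', c') -> Cq q c != Cq q' c'.
Proof.
move=> hc hne; apply/eqP => /(congr1 (fun X => tnth X q)); rewrite /Cq !tnth_upd !inE eqxx !tnth_cstr.
case: (eqVneq q q') => [eq|nq] /= e.
  by move: hne; rewrite eq e eqxx.
by move: hc; rewrite e eqxx.
Qed.

Definition fwc (q : 'I_t) := [seq c <- [:: i0; i1; i2] | c != tnth C q].
Definition TWC := [seq (q, c) | q <- enum 'I_t, c <- fwc q].
Definition Lab0 := option (option ('I_t * 'I_3)).
Definition pth0 (l : Lab0) : seq V :=
  match l with None => R1 | Some None => R2 | Some (Some qc) => TC qc.1 qc.2 end.
Definition labs0 : seq Lab0 := [:: None; Some None] ++ [seq Some (Some qc) | qc <- TWC].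

Lemma size_fwc q : size (fwc q) = 2.
Proof. by rewrite /fwc; case: (tnth C q) => [[|[|[|k]]] hk]. Qed.

Lemma TWC_size : size TWC = 2 * t.
Proof.
rewrite size_allpairs_dep (eq_map size_fwc) -[t in 2 * t]size_enum_ord.
by elim: (enum 'I_t) => //= x l ->; rewrite mulnS.
Qed.

Lemma TWC_mem q c : (q, c) \in TWC -> c != tnth C q.
Proof.
case/allpairsPdep => q' [c' [_ hc [-> ->]]].
by move: hc; rewrite mem_filter => /andP[].
Qed.

Lemma TWC_uniq : uniq TWC.
Proof. apply: uniq_pairs; [exact: enum_uniq | move=> q; exact: uniq3]. Qed.

Lemma labs0_uniq : uniq labs0.
Proof.
apply: uniq_catP => //.
- by rewrite map_inj_uniq ?TWC_uniq // => ? ? [].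
by move=> x; rewrite !inE => /orP[]/eqP-> /mapP[].
Qed.

Lemma labs0_size : size labs0 = 2 * t + 2.
Proof. by rewrite /labs0 size_cat size_map TWC_size /= addnC. Qed.

Lemma lab0_TC q c : Some (Some (q, c)) \in labs0 -> c != tnth C q.
Proof.
rewrite mem_cat => /orP[|/mapP[qc hm [e]]]; first by rewrite !inE.
by rewrite -e in hm; exact: TWC_mem.
Qed.

Lemma pth0_props l : l \in labs0 ->
  [/\ path e3c_adj u0 (pth0 l), last u0 (pth0 l) = v0, uniq (u0 :: pth0 l)
     & size (pth0 l) <= a + size E + 5].
Proof.
case: l => [[[q c]|]|] /=.
- move/lab0_TC => hc; split; [exact: TC_path | exact: TC_last | exact: TC_uniq | change (size (TC q c) <= a + size E + 5); by rewrite TC_size].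
- by move=> _; split; [exact: R2_path | exact: R2_last | exact: R2_uniq | change (size R2 <= a + size E + 5); rewrite R2_size; lia].
- by move=> _; split; [exact: R1_path | exact: R1_last | exact: R1_uniq | change (size R1 <= a + size E + 5); rewrite R1_size; lia].
Qed.

Lemma conf_R12 x : x \in R1 -> x != v0 -> x \in R2 -> x != v0 -> False.
Proof.
move=> h1 h1' h2 h2'; case: (R1_feat h1 h1') => _; case: (R2_feat h2 h2') => _.
case/orP => /andP[/eqP d1 /eqP e1]; case/orP => /andP[/eqP d2 /eqP e2];
  rewrite ?d1 in d2; try done.
- by move: hB; rewrite -e1 e2 eqxx.
- by move: hA; rewrite -e1 e2 eqxx.
Qed.

Lemma pth0_conf l l' : l \in labs0 -> l' \in labs0 -> l != l' ->
  forall x, x \in pth0 l -> x != v0 -> x \in pth0 l' -> x != v0 -> False.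
Proof.
case: l => [[[q c]|]|]; case: l' => [[[q' c']|]|] //= hl hl' hne x h1 h1' h2 h2'.
- move: (Cq_inj (lab0_TC hl) (hne : (q, c) != (q', c')) ) => /eqP; apply.
  by rewrite -(TC_feat h1 h1') -(TC_feat h2 h2').
- case: (R2_feat h2 h2') => hc _; move: (nCq (lab0_TC hl)).
  by rewrite -(TC_feat h1 h1') hc eqxx.
- case: (R1_feat h2 h2') => hc _; move: (nCq (lab0_TC hl)).
  by rewrite -(TC_feat h1 h1') hc eqxx.
- case: (R2_feat h1 h1') => hc _; move: (nCq (lab0_TC hl')).
  by rewrite -(TC_feat h2 h2') hc eqxx.
- by apply: (conf_R12 h2 h2' h1 h1').
- case: (R1_feat h1 h1') => hc _; move: (nCq (lab0_TC hl')).
  by rewrite -(TC_feat h2 h2') hc eqxx.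
- by apply: (conf_R12 h1 h1' h2 h2').
Qed.

Lemma d0_paths : r <= t -> exists ps : seq (seq V),
  [/\ size ps = 2 * r + 2, (forall p, p \in ps -> is_uv_path u0 v0 p), int_disjoint ps
     & forall p, p \in ps -> size p <= r + s + 5].
Proof.
move=> hrt; exists (take (2 * r + 2) (map pth0 labs0)); split.
- by rewrite size_takel // size_map labs0_size; lia.
- move=> p /mem_take /mapP[l hl ->]; case: (pth0_props hl) => h1 h2 h3 _.
  by rewrite /is_uv_path h1 h2 eqxx h3.
- apply: int_disjoint_pairwise; apply: (subseq_pairwise (take_subseq _ _)).
  apply: pairwise_lab; first exact: labs0_uniq.
  move=> l l' hl hl' hne; case: (pth0_props hl) => _ l1 u1 _; case: (pth0_props hl') => _ l2 u3 _.
  apply: (disjI u1 l1 u3 l2) => x; exact: (pth0_conf hl hl' hne).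
- move=> p /mem_take /mapP[l hl ->]; case: (pth0_props hl) => _ _ _ h; apply: leq_trans h _.
  have := size_dl A A'; have := size_dl B B'; lia.
Qed.

End Main.

Definition swd (e : 'I_3) : 'I_3 := if e == i1 then i2 else if e == i2 then i1 else e.
Definition sw {r s t} (x : vert r s t) : vert s r t := (vB x, vA x, vC x, swd (vd x)).

Lemma swK r s t (x : vert r s t) : sw (sw x) = x.
Proof.
case: x => [[[X Y] Z] e]; rewrite /sw /vA /vB /vC /vd /=; congr (_, _).
by case: e => [[|[|[|e]]] he] //; apply: val_inj.
Qed.

Lemma sw_adj r s t (x y : vert r s t) : e3c_adj (sw x) (sw y) = e3c_adj x y.
Proof.
case: x => [[[X Y] Z] e]; case: y => [[[X' Y'] Z'] e'].
rewrite /e3c_adj /sw /vA /vB /vC /vd /=.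
case: e => [[|[|[|e]]] he] //; case: e' => [[|[|[|e']]] he'] //=.
all: rewrite /swd /=.
all: case: (X == X'); case: (Y == Y'); case: (Z == Z'); rewrite /= ?andbF ?orbF //.
Qed.

Lemma sw_inj r s t : injective (@sw r s t).
Proof. by move=> x y e; rewrite -(swK x) e swK. Qed.

Lemma sw_uv r s t (u v : vert r s t) p :
  is_uv_path u v p -> is_uv_path (sw u) (sw v) (map sw p).
Proof.
rewrite /is_uv_path => /and3P[hp /eqP hl hu]; apply/and3P; split.
- have E : relpre sw e3c_adj =2 @e3c_adj r s t by move=> x y; exact: sw_adj.
  by rewrite path_map (eq_path E).
- by rewrite last_map hl.
- by rewrite -map_cons map_inj_uniq //; exact: sw_inj.
Qed.

Lemma interior_map (T T' : Type) (f : T -> T') (p : seq T) :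
  interior (map f p) = map f (interior p).
Proof. by rewrite /interior size_map map_take. Qed.

Lemma int_disjoint_map (T T' : eqType) (f : T -> T') (ps : seq (seq T)) :
  injective f -> int_disjoint ps -> int_disjoint (map (map f) ps).
Proof.
move=> hf H i j; rewrite size_map => hi hj hij x.
rewrite !(nth_map [::]) // !interior_map => /mapP[y hy ->].
by rewrite (mem_map hf); apply: (H i j hi hj hij y hy).
Qed.

Lemma int_disjoint_take (T : eqType) n (ps : seq (seq T)) :
  int_disjoint ps -> int_disjoint (take n ps).
Proof.
move=> H i j hi hj hij x.
have [hin his] : i < n /\ i < size ps.
  by move: hi; rewrite size_take; case: (ltnP n (size ps)) => h1 h2; lia.
have [hjn hjs] : j < n /\ j < size ps.
  by move: hj; rewrite size_take; case: (ltnP n (size ps)) => h1 h2; lia.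
rewrite !nth_take //; exact: H.
Qed.

Lemma ex_ord n (X Y : n.-tuple 'I_3) : X != Y -> exists x : 'I_n, True.
Proof. by move/dl_nil; case: (dl X Y) => // x _ _; exists x. Qed.

Theorem lemma12 (r s t : nat) (u v : vert r s t) :
  1 <= r -> r <= s -> s <= t ->
  vA u != vA v -> vB u != vB v -> vC u = vC v -> vd u = vd v ->
  exists ps : seq (seq (vert r s t)),
    [/\ size ps = 2 * r + 2,
        (forall p, p \in ps -> is_uv_path u v p),
        int_disjoint ps
      & forall p, p \in ps ->
          size p <= (if vd u == i0 then r + s + 5 else r + s + 7)].
Proof.
case: u => [[[A B] C] e]; case: v => [[[A' B'] C'] e'].
rewrite /vA /vB /vC /vd /= => h1 hrs hst hA hB hC hd; subst C' e'.
have ht : 0 < t by lia.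
have q0 : 'I_t := Ordinal ht.
have [x0 _] := ex_ord hA.
have [y0 _] := ex_ord hB.
case: e => [[|[|[|k]]] hk].
- have -> : Ordinal hk = i0 by apply: val_inj.
  rewrite eqxx; apply: (d0_paths hA hB C); lia.
- have -> : Ordinal hk = i1 by apply: val_inj.
  have [ps' [hs hp hi hl]] := d2_paths hB hA C y0 q0.
  exists (take (2 * r + 2) (map (map sw) ps')); split.
  + by rewrite size_takel // size_map hs; lia.
  + move=> p /mem_take /mapP[p' hp' ->]; exact: (sw_uv (hp p' hp')).
  + by apply/int_disjoint_take/int_disjoint_map => //; exact: sw_inj.
  + move=> p /mem_take /mapP[p' hp' ->] /=; rewrite size_map.
    by rewrite (addnC r s); exact: hl.
- have -> : Ordinal hk = i2 by apply: val_inj.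
  exact: (d2_paths hA hB C x0 q0).
- by [].
Qed.
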